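(* Let $K$ be the field of fractions of a complete discrete valuation ring $\mathcal{O}$. In the coefficient-choosing game of degree $d = 4$ over $K$, if Nora makes the last move then Nora has a winning strategy.
   Context: The coefficient-choosing game of degree $d$ over $K$: Nora and Wanda alternately choose coefficients of $f(x) = a_d x^d + \cdots + a_0$; on each move the current player picks a not-yet-chosen coefficient and assigns it a value in $K$, subject to $a_d \neq 0$, $a_0 \neq 0$. After all $d+1$ coefficients are chosen, Wanda wins if $f$ has a root in $K$, and Nora wins otherwise. *)

(* Defs.v *)
From HB Require Import structures.
From mathcomp Require Import all_boot all_order all_algebra.
Set Implicit Arguments. Unset Strict Implicit. Unset Printing Implicit Defensive.
Import Order.TTheory GRing.Theory Num.Theory.
Local Open Scope ring_scope.

(* A normalized discrete valuation v : K^* ->> Z (the value at 0 is irrelevant;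
   it stands for +oo and is never used).  Its valuation ring
   O = {x | x = 0 \/ 0 <= v x} is a discrete valuation ring with fraction field K. *)
Definition is_discrete_valuation (K : fieldType) (v : K -> int) : Prop :=
  [/\ (forall x y : K, x != 0 -> y != 0 -> v (x * y) = v x + v y),
      (forall x y : K, x != 0 -> y != 0 -> x + y != 0 ->
          Num.min (v x) (v y) <= v (x + y))
    & (exists pi : K, pi != 0 /\ v pi = 1)].

Definition vclose (K : fieldType) (v : K -> int) (N : int) (x y : K) : Prop :=
  x = y \/ N <= v (x - y).

Definition vcauchy (K : fieldType) (v : K -> int) (u : nat -> K) : Prop :=
  forall N : int, exists M : nat, forall m n : nat,
    (M <= m)%N -> (M <= n)%N -> vclose v N (u m) (u n).

Definition vconverges (K : fieldType) (v : K -> int) (u : nat -> K) (l : K) : Prop :=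
  forall N : int, exists M : nat, forall n : nat, (M <= n)%N -> vclose v N (u n) l.

Definition vcomplete (K : fieldType) (v : K -> int) : Prop :=
  forall u : nat -> K, vcauchy v u -> exists l : K, vconverges v u l.

Inductive player := Nora | Wanda.

Definition other (p : player) : player :=
  match p with Nora => Wanda | Wanda => Nora end.

(* a position: coefficient a_i is [Some c] if already chosen, [None] otherwise *)
Definition position (K : fieldType) (d : nat) := 'I_d.+1 -> option K.

Definition legal_move (K : fieldType) (d : nat) (s : position K d)
    (i : 'I_d.+1) (a : K) : Prop :=
  s i = None /\ ((val i = 0)%N \/ (val i = d)%N -> a != 0).

Definition play (K : fieldType) (d : nat) (s : position K d)
    (i : 'I_d.+1) (a : K) : position K d :=
  fun j => if j == i then Some a else s j.

Definition poly_of_position (K : fieldType) (d : nat) (s : position K d) : {poly K} :=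
  \poly_(i < d.+1) (if insub i is Some j then odflt 0 (s j) else 0).

Fixpoint nora_wins (K : fieldType) (d : nat) (n : nat) (p : player)
    (s : position K d) : Prop :=
  match n with
  | 0 => forall x : K, ~~ root (poly_of_position s) x
  | n'.+1 =>
      match p with
      | Nora => exists i a, legal_move s i a /\ nora_wins n' Wanda (play s i a)
      | Wanda => forall i a, legal_move s i a -> nora_wins n' Nora (play s i a)
      end
  end.

Definition empty_position (K : fieldType) (d : nat) : position K d := fun _ => None.

Definition nora_has_winning_strategy (K : fieldType) (d : nat) (first : player) : Prop :=
  @nora_wins K d d.+1 first (@empty_position K d).

Definition last_mover (d : nat) (first : player) : player :=
  if odd d.+1 then first else other first.

(* Main.v *)
Require Import Defs.
From mathcomp Require Import all_boot all_order all_algebra zify.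
Import Order.TTheory GRing.Theory Num.Theory.
Local Open Scope ring_scope.
Set Implicit Arguments. Unset Strict Implicit. Unset Printing Implicit Defensive.

Section Val.
Variables (K : fieldType) (v : K -> int).
Hypothesis Hv : is_discrete_valuation v.

Lemma vM {x y} : x != 0 -> y != 0 -> v (x * y) = v x + v y.
Proof. by move: Hv; rewrite /is_discrete_valuation; case=> [h1 h2 _]; first [exact: h1 | exact: h2]. Qed.

Lemma vD {x y} : x != 0 -> y != 0 -> x + y != 0 -> Num.min (v x) (v y) <= v (x + y).
Proof. by move: Hv; rewrite /is_discrete_valuation; case=> [h1 h2 _]; first [exact: h1 | exact: h2]. Qed.

Lemma v1 : v 1 = 0.
Proof. have := @vM 1 1 (oner_neq0 K) (oner_neq0 K). rewrite mulr1. lia. Qed.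

Lemma vN1 : v (-1) = 0.
Proof.
have h : (-1 : K) != 0 by rewrite oppr_eq0 oner_neq0.
have := vM h h. rewrite mulrNN mulr1 v1. lia.
Qed.

Lemma vN x : x != 0 -> v (- x) = v x.
Proof.
move=> hx; have h : (-1 : K) != 0 by rewrite oppr_eq0 oner_neq0.
by rewrite -mulN1r vM // vN1 add0r.
Qed.

Lemma vX x n : x != 0 -> v (x ^+ n) = (n%:Z) * v x.
Proof.
move=> hx; elim: n => [|n IH]; first by rewrite expr0 v1 mul0r.
rewrite exprS vM ?expf_neq0 // IH. lia.
Qed.

Lemma vV x : x != 0 -> v (x^-1) = - v x.
Proof.
move=> hx. have := vM hx (invr_neq0 hx). rewrite mulfV // v1. lia.
Qed.

Lemma vsurj (z : int) : exists c : K, c != 0 /\ v c = z.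
Proof.
case: Hv => _ _ [pi [hpi vpi]].
case: z => n.
  exists (pi ^+ n); split; first by rewrite expf_neq0.
  by rewrite vX // vpi mulr1.
exists ((pi ^+ n.+1)^-1); split; first by rewrite invr_neq0 // expf_neq0.
rewrite vV ?expf_neq0 // vX // vpi mulr1 NegzE. lia.
Qed.

Definition Pd (a y : K) := y = 0 \/ v a < v y.

Lemma Pd_add a y z : Pd a y -> Pd a z -> Pd a (y + z).
Proof.
move=> [->|hy]; first by rewrite add0r.
move=> [->|hz]; first by rewrite addr0; right.
case: (eqVneq (y + z) 0) => h; first by left.
right.
case: (eqVneq y 0) => [y0|yn0]; first by rewrite y0 add0r.
case: (eqVneq z 0) => [z0|zn0]; first by rewrite z0 addr0.
have := vD yn0 zn0 h.
rewrite /Num.min; case: ifP => _ h2; exact: lt_le_trans h2.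
Qed.

Lemma Pd_nz a y : a != 0 -> Pd a y -> a + y != 0.
Proof.
move=> ha [->|hy]; first by rewrite addr0.
apply/negP => /eqP h.
have ey : y = - a by apply/eqP; rewrite -subr_eq0 opprK addrC h.
move: hy; rewrite ey vN //. lia.
Qed.

Lemma dom_sum n (T : 'I_n -> K) (j : 'I_n) :
  T j != 0 -> (forall i, i != j -> Pd (T j) (T i)) -> \sum_i T i != 0.
Proof.
move=> hj hi; rewrite (bigD1 j) //=; apply: Pd_nz => //.
apply: (big_ind (Pd (T j))); [by left | exact: Pd_add | ].
by move=> i /hi.
Qed.

Definition cf (s : position K 4) (i : 'I_5) : K := odflt 0 (s i).

Lemma horner_pos (s : position K 4) x :
  (poly_of_position s).[x] = \sum_(i < 5) cf s i * x ^+ i.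
Proof.
rewrite /poly_of_position horner_poly; apply: eq_bigr => i _.
by rewrite valK.
Qed.

Lemma G (s : position K 4) :
  cf s ord0 != 0 ->
  (forall t : int, exists j : 'I_5, cf s j != 0 /\
     forall i : 'I_5, i != j -> cf s i = 0 \/
        v (cf s j) + (j : nat)%:Z * t < v (cf s i) + (i : nat)%:Z * t) ->
  forall x, ~~ root (poly_of_position s) x.
Proof.
move=> h0 H x; rewrite /root horner_pos.
case: (eqVneq x 0) => [->|hx].
  rewrite big_ord_recl expr0 mulr1 big1 ?addr0 //.
  by move=> i _; rewrite /= expr0n /= mulr0.
have [j [hj hi]] := H (v x).
have hj' : cf s j * x ^+ j != 0 by rewrite mulf_neq0 // expf_neq0.
apply: (@dom_sum 5 (fun i : 'I_5 => cf s i * x ^+ i) j hj').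
move=> i /hi [->|lt]; first by left; rewrite mul0r.
case: (eqVneq (cf s i) 0) => [->|ci]; first by left; rewrite mul0r.
right; rewrite !vM ?expf_neq0 // !vX //.
Qed.
End Val.
Notation o0 := (@Ordinal 5 0 isT).
Notation o1 := (@Ordinal 5 1 isT).
Notation o2 := (@Ordinal 5 2 isT).
Notation o3 := (@Ordinal 5 3 isT).
Notation o4 := (@Ordinal 5 4 isT).
Section Fin.
Variables (K : fieldType) (v : K -> int).
Hypothesis Hv : is_discrete_valuation v.


Lemma ordcase (i : 'I_5) : i = o0 \/ i = o1 \/ i = o2 \/ i = o3 \/ i = o4.
Proof.
case: i => [[|[|[|[|[|n]]]]] Hi].
- by left; apply: val_inj.
- by right; left; apply: val_inj.
- by do 2 right; left; apply: val_inj.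
- by do 3 right; left; apply: val_inj.
- by do 4 right; apply: val_inj.
- by [].
Qed.

Lemma cf_play (s : position K 4) k a i :
  cf (play s k a) i = if i == k then a else cf s i.
Proof. by rewrite /cf /play; case: (i == k). Qed.

Lemma bigM4 (B r : int) : exists M q : int, B < M /\ M + r = 4 * q + 1.
Proof.
exists (4 * (divz (B + r) 4 + 1) + 1 - r)%Z, (divz (B + r) 4 + 1)%Z. lia.
Qed.

Lemma bigM2 (B r : int) : exists M q : int, B < M /\ M + r = 2 * q + 1.
Proof.
exists (2 * (divz (B + r) 2 + 1) + 1 - r)%Z, (divz (B + r) 2 + 1)%Z. lia.
Qed.


Ltac fincase := let i := fresh "i" in let hne := fresh "hne" in
  move=> i; case: (ordcase i) => [->|[->|[->|[->|->]]]] hne; rewrite ?cf_play /=;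
  try by rewrite eqxx in hne.

Lemma fin_end0 (s : position K 4) a4 : s o0 = None -> s o4 = Some a4 -> a4 != 0 ->
  exists a, legal_move s o0 a /\ forall x, ~~ root (poly_of_position (play s o0 a)) x.
Proof.
move=> h0 h4 ha4.
have e4 : cf s o4 = a4 by rewrite /cf h4.
have [M [q [hM hq]]] := bigM4 (4 * (`|v (cf s o1)| + `|v (cf s o2)| + `|v (cf s o3)| + `|v a4|)) (v a4).
have [a [ha va]] := vsurj Hv (- M).
exists a; split; first by split.
have hc0 : cf (play s o0 a) o0 = a by rewrite cf_play.
apply: (G Hv) => //.
idtac.
move=> t.
case: (boolP (-M < v a4 + 4 * t)) => ht.
- exists o0; split; first by rewrite hc0.
  by fincase; right; rewrite ?e4 ?va; lia.
- exists o4; split; first by rewrite cf_play /= e4.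
  by fincase; right; rewrite ?e4 ?va; lia.
Qed.

Lemma fin_end4 (s : position K 4) a0 : s o4 = None -> s o0 = Some a0 -> a0 != 0 ->
  exists a, legal_move s o4 a /\ forall x, ~~ root (poly_of_position (play s o4 a)) x.
Proof.
move=> h4 h0 ha0.
have e0 : cf s o0 = a0 by rewrite /cf h0.
have [M [q [hM hq]]] := bigM4 (4 * (`|v (cf s o1)| + `|v (cf s o2)| + `|v (cf s o3)| + `|v a0|)) (v a0).
have [a [ha va]] := vsurj Hv (- M).
exists a; split; first by split.
have hc4 : cf (play s o4 a) o4 = a by rewrite cf_play.
apply: (G Hv); first by rewrite (_ : (ord0 : 'I_5) = o0); [rewrite cf_play /= e0 | apply: val_inj].
move=> t.
case: (boolP (v a0 < - M + 4 * t)) => ht.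
  exists o0; split; first by rewrite cf_play /= e0.
  by fincase; right; rewrite ?e0 ?va; lia.
exists o4; split; first by rewrite hc4.
by fincase; right; rewrite ?e0 ?va; lia.
Qed.

Lemma fin_mid (s : position K 4) a0 a4 : s o2 = None -> s o1 = Some 0 -> s o3 = Some 0 ->
  s o0 = Some a0 -> s o4 = Some a4 -> a0 != 0 -> a4 != 0 ->
  exists a, legal_move s o2 a /\ forall x, ~~ root (poly_of_position (play s o2 a)) x.
Proof.
move=> h2 h1 h3 h0 h4 ha0 ha4.
have e0 : cf s o0 = a0 by rewrite /cf h0.
have e4 : cf s o4 = a4 by rewrite /cf h4.
have e1 : cf s o1 = 0 by rewrite /cf h1.
have e3 : cf s o3 = 0 by rewrite /cf h3.
have [q [r [hqr hr]]] : exists q r : int, v a0 - v a4 = 2 * q + r /\ 0 <= r <= 1.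
  by exists (divz (v a0 - v a4) 2), (modz (v a0 - v a4) 2); lia.
case: (boolP (r == 1)) => hr1.
  exists 0; split; first by split => //; case.
  apply: (G Hv); first by rewrite (_ : (ord0 : 'I_5) = o0); [rewrite cf_play /= e0 | apply: val_inj].
  move=> t.
  case: (boolP (v a0 < v a4 + 4 * t)) => ht.
    exists o0; split; first by rewrite cf_play /= e0.
    by fincase; rewrite ?e0 ?e1 ?e3 ?e4; first [by left | right; lia].
  exists o4; split; first by rewrite cf_play /= e4.
  by fincase; rewrite ?e0 ?e1 ?e3 ?e4; first [by left | right; lia].
have [M [q' [hM hq']]] := bigM2 (`|v a0| + `|v a4|) (v a0).
have [a [ha va]] := vsurj Hv (- M).
exists a; split; first by split.
apply: (G Hv); first by rewrite (_ : (ord0 : 'I_5) = o0); [rewrite cf_play /= e0 | apply: val_inj].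
move=> t.
have : (v a0 < - M + 2 * t /\ v a0 < v a4 + 4 * t) \/
       (- M + 2 * t < v a0 /\ - M + 2 * t < v a4 + 4 * t) \/
       (v a4 + 4 * t < v a0 /\ v a4 + 4 * t < - M + 2 * t) by lia.
case=> [ht|[ht|ht]].
    exists o0; split; first by rewrite cf_play /= e0.
    by fincase; rewrite ?e0 ?e1 ?e3 ?e4 ?va; first [by left | right; lia].
  exists o2; split; first by rewrite cf_play /=.
  by fincase; rewrite ?e0 ?e1 ?e3 ?e4 ?va; first [by left | right; lia].
exists o4; split; first by rewrite cf_play /= e4.
by fincase; rewrite ?e0 ?e1 ?e3 ?e4 ?va; first [by left | right; lia].
Qed.
End Fin.

Theorem proposition1 (K : fieldType) (v : K -> int)
    (Hv : is_discrete_valuation v) (Hc : vcomplete v) (first : player) :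
  last_mover 4 first = Nora -> nora_has_winning_strategy K 4 first.
Proof.
case: first => //= _.
rewrite /nora_has_winning_strategy /=.
exists o1, 0; split; first by split => //; case.
move=> i a [hi hia].
case: (ordcase i) hi hia => [->|[->|[->|[->|->]]]] hi hia.
- have ha : a != 0 by apply: hia; left.
  exists o3, 0; split; first by split => //; case.
  move=> j b [hj hjb].
  case: (ordcase j) hj hjb => [->|[->|[->|[->|->]]]] hj hjb //.
  + exists o4; apply: (fin_end4 Hv (a0 := a)) => //.
  + have hb : b != 0 by apply: hjb; right.
    exists o2; apply: (fin_mid Hv (a0 := a) (a4 := b)) => //.
- by [].
- exists o3, 0; split; first by split => //; case.
  move=> j b [hj hjb].
  case: (ordcase j) hj hjb => [->|[->|[->|[->|->]]]] hj hjb //.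
  + have hb : b != 0 by apply: hjb; left.
    exists o4; apply: (fin_end4 Hv (a0 := b)) => //.
  + have hb : b != 0 by apply: hjb; right.
    exists o0; apply: (fin_end0 Hv (a4 := b)) => //.
- exists o2, 0; split; first by split => //; case.
  move=> j b [hj hjb].
  case: (ordcase j) hj hjb => [->|[->|[->|[->|->]]]] hj hjb //.
  + have hb : b != 0 by apply: hjb; left.
    exists o4; apply: (fin_end4 Hv (a0 := b)) => //.
  + have hb : b != 0 by apply: hjb; right.
    exists o0; apply: (fin_end0 Hv (a4 := b)) => //.
- have ha : a != 0 by apply: hia; right.
  exists o3, 0; split; first by split => //; case.
  move=> j b [hj hjb].
  case: (ordcase j) hj hjb => [->|[->|[->|[->|->]]]] hj hjb //.
  + have hb : b != 0 by apply: hjb; left.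
    exists o2; apply: (fin_mid Hv (a0 := b) (a4 := a)) => //.
  + exists o0; apply: (fin_end0 Hv (a4 := a)) => //.
Qed.
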